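(* Under all the hypotheses of the following setting: $C\subseteq\mathbb{R}^n$ nonempty closed convex; $F$ continuously differentiable; $x^*$ a solution of VIP$(F,C)$; a neighborhood $X$ of $x^*$ and constants $L_1,L_2,\mu>0$ with $\|F(x)-F(y)\|\le L_1\|x-y\|$, $\|\nabla F(x)-\nabla F(y)\|\le L_2\|x-y\|$ for $x,y\in X$ and $\langle\nabla F(x)d,d\rangle\ge\mu\|d\|^2$ for $x\in X$, $d\in\mathbb{R}^n$; sequences $\{x_k\}\subset C$ with $x_k\to x^*$, $B_k$, $\mu_k>0$, $\rho_k\ge0$, $\delta_k>0$, inexact solutions $z_k\in C$ and exact solutions $\hat z_k$ of VIP$(\varphi_k,C)$; and constants $D,C_1,C_2>0$ such that for all sufficiently large $k$: $\|B_k-\nabla F(x_k)\|\le D$; $\mu_k=O(r_k)$, $\mu_k\le C_1\|x_k-x^*\|$, $\rho_k\to0$; $B_k+\mu_kI$ positive definite with $(1+\|B_k+\mu_kI\|)/c_k\le C_2$; $\|(B_k-\nabla F(x_k))(z_k-x_k)\|\le\delta_k\|z_k-x_k\|$, $\mu_k<\mu/2$, $\delta_k\le\mu/16$. Then for every $\alpha>0$ there exist constants $L_1',L_2',L_3',L_4',L_5'>0$ such that for all sufficiently large $k$, $$f_\alpha(z_k)\le L_1'\|x_k-x^*\|^4+(L_2'\delta_k+L_3')\|x_k-x^*\|^3+(L_4'\delta_k+L_5'\delta_k^2)\|x_k-x^*\|^2.$$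
   Context: VIP$(F,C)$: find $x^*\in C$ with $\langle F(x^* ),x-x^*\rangle\ge0$ for all $x\in C$. $P_C$ is the Euclidean projection onto $C$. $r_k=\|x_k-P_C(x_k-F(x_k))\|$. For $\alpha>0$ the merit function is $f_\alpha(x)=\max_{y\in C}\{-\langle F(x),y-x\rangle-\tfrac{\alpha}{2}\|y-x\|^2\}$. For each $k$, $\varphi_k(z)=F(x_k)+(B_k+\mu_kI)(z-x_k)$; $\hat z_k\in C$ is the unique solution of VIP$(\varphi_k,C)$: $\langle\varphi_k(\hat z_k),x-\hat z_k\rangle\ge0$ for all $x\in C$. With $e_k=z_k-P_C(z_k-\varphi_k(z_k))$, the inexact solutions $z_k\in C$ satisfy $\|e_k\|\le\rho_k\mu_k\|z_k-x_k\|$ and $\langle e_k,\varphi_k(z_k)+z_k-x_k\rangle\le\rho_k\mu_k\|z_k-x_k\|^2$. $c_k$ is the smallest eigenvalue of the symmetric part of $B_k+\mu_kI$. *)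

(* Defs.v *)
From HB Require Import structures.
From mathcomp Require Import all_boot all_order all_algebra.
From mathcomp Require Import all_classical all_reals all_analysis.
Set Implicit Arguments. Unset Strict Implicit. Unset Printing Implicit Defensive.
Import Order.TTheory GRing.Theory Num.Theory.
Import numFieldNormedType.Exports.
Local Open Scope classical_set_scope.
Local Open Scope ring_scope.

Section Defs.
Variables (R : realType) (n : nat).
Implicit Types (x y d : 'cV[R]_n) (A : 'M[R]_n) (C : set 'cV[R]_n).

Definition dotv x y : R := \sum_(i < n) x i 0 * y i 0.
Definition vnorm x : R := Num.sqrt (dotv x x).

Definition opnorm A : R := sup [set vnorm (A *m x) | x in [set x | vnorm x <= 1]].

(* Euclidean projection onto C (the unique nearest point when C is nonempty closed convex) *)
Definition projC C x : 'cV[R]_n :=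
  xget 0 [set p | C p /\ forall y, C y -> vnorm (x - p) <= vnorm (x - y)].

Definition vip_sol (G : 'cV[R]_n -> 'cV[R]_n) C xs : Prop :=
  C xs /\ forall y, C y -> 0 <= dotv (G xs) (y - xs).

Definition merit (F : 'cV[R]_n -> 'cV[R]_n) C (alpha : R) x : R :=
  sup [set - dotv (F x) (y - x) - alpha / 2 * vnorm (y - x) ^+ 2 | y in C].

Definition phi (F : 'cV[R]_n -> 'cV[R]_n) A (m : R) xk (z : 'cV[R]_n) : 'cV[R]_n :=
  F xk + (A + m%:M) *m (z - xk).

Definition posdef A : Prop := forall x, x != 0 -> 0 < dotv x (A *m x).

Definition min_eig_sym A : R :=
  inf [set a : R | eigenvalue ((2%:R)^-1 *: (A + A^T)) a].

Definition C1_jacobian (F : 'cV[R]_n -> 'cV[R]_n) (JF : 'cV[R]_n -> 'M[R]_n) : Prop :=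
  (forall x (e : R), 0 < e -> exists2 del : R, 0 < del & forall y,
     vnorm (y - x) < del -> vnorm (F y - F x - JF x *m (y - x)) <= e * vnorm (y - x)) /\
  (forall x (e : R), 0 < e -> exists2 del : R, 0 < del & forall y,
     vnorm (y - x) < del -> opnorm (JF y - JF x) <= e).
End Defs.

(* Main.v *)
Require Import Defs.
From HB Require Import structures.
From mathcomp Require Import all_boot all_order all_algebra.
From mathcomp Require Import all_classical all_reals all_analysis.
From mathcomp Require Import ring lra.
Set Implicit Arguments. Unset Strict Implicit.
Import Order.TTheory GRing.Theory Num.Theory.
Import numFieldNormedType.Exports.
Local Open Scope classical_set_scope.
Local Open Scope ring_scope.

Section Basics.
Variables (R : realType) (n : nat).
Implicit Types (x y w : 'cV[R]_n).

Lemma dotvC x y : dotv x y = dotv y x.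
Proof. by apply: eq_bigr => i _; rewrite mulrC. Qed.

Lemma dotvDl x y w : dotv (x + y) w = dotv x w + dotv y w.
Proof. by rewrite /dotv -big_split; apply: eq_bigr => i _; rewrite mxE mulrDl. Qed.

Lemma dotvZl (a : R) x y : dotv (a *: x) y = a * dotv x y.
Proof. by rewrite /dotv mulr_sumr; apply: eq_bigr => i _; rewrite mxE mulrA. Qed.

Lemma dotvNl x y : dotv (- x) y = - dotv x y.
Proof. by rewrite -scaleN1r dotvZl mulN1r. Qed.

Lemma dotvBl x y w : dotv (x - y) w = dotv x w - dotv y w.
Proof. by rewrite dotvDl dotvNl. Qed.

Lemma dotvDr x y w : dotv w (x + y) = dotv w x + dotv w y.
Proof. by rewrite dotvC dotvDl !(dotvC w). Qed.

Lemma dotvBr x y w : dotv w (x - y) = dotv w x - dotv w y.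
Proof. by rewrite dotvC dotvBl !(dotvC w). Qed.

Lemma dotvZr (a : R) x y : dotv x (a *: y) = a * dotv x y.
Proof. by rewrite dotvC dotvZl dotvC. Qed.

Lemma dotv0l x : dotv 0 x = 0.
Proof. by rewrite /dotv big1 // => i _; rewrite mxE mul0r. Qed.

Lemma dotv0r x : dotv x 0 = 0.
Proof. by rewrite dotvC dotv0l. Qed.

Lemma dotv_ge0 x : 0 <= dotv x x.
Proof. by apply: sumr_ge0 => i _; rewrite -expr2 sqr_ge0. Qed.

Lemma vnorm_ge0 x : 0 <= vnorm x.
Proof. exact: sqrtr_ge0. Qed.

Lemma vnorm_sq x : vnorm x ^+ 2 = dotv x x.
Proof. by rewrite sqr_sqrtr // dotv_ge0. Qed.

Lemma dotv_eq0 x : dotv x x = 0 -> x = 0.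
Proof.
move=> h; apply/matrixP => i j; rewrite ord1 mxE.
have hh : forall k : 'I_n, xpredT k -> 0 <= x k 0 * x k 0.
  by move=> k _; rewrite -expr2 sqr_ge0.
have := @psumr_eq0P R _ xpredT (fun i => x i 0 * x i 0) hh h i isT.
by move=> /eqP; rewrite mulf_eq0 orbb => /eqP.
Qed.

Lemma vnorm_eq0 x : vnorm x = 0 -> x = 0.
Proof. by move=> h; apply: dotv_eq0; rewrite -vnorm_sq h expr0n. Qed.

Lemma vnorm0 : vnorm (0 : 'cV[R]_n) = 0.
Proof. by rewrite /vnorm dotv0l sqrtr0. Qed.

Lemma vnormZ (a : R) x : vnorm (a *: x) = `|a| * vnorm x.
Proof.
by rewrite /vnorm dotvZl dotvZr mulrA -expr2 sqrtrM ?sqr_ge0 // sqrtr_sqr.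
Qed.

Lemma vnormN x : vnorm (- x) = vnorm x.
Proof. by rewrite -scaleN1r vnormZ normrN1 mul1r. Qed.

Lemma vnormB x y : vnorm (x - y) = vnorm (y - x).
Proof. by rewrite -vnormN opprB. Qed.

Lemma dotv_le x y : dotv x y <= vnorm x * vnorm y.
Proof.
have [a0|a0] := eqVneq (vnorm x) 0.
  by rewrite (vnorm_eq0 a0) dotv0l vnorm0 mul0r.
have [b0|b0] := eqVneq (vnorm y) 0.
  by rewrite (vnorm_eq0 b0) dotv0r vnorm0 mulr0.
have := dotv_ge0 (vnorm y *: x - vnorm x *: y).
rewrite !(dotvBl, dotvBr, dotvZl, dotvZr) -!vnorm_sq (dotvC y x).
have ha : 0 < vnorm x by rewrite lt_neqAle eq_sym a0 vnorm_ge0.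
have hb : 0 < vnorm y by rewrite lt_neqAle eq_sym b0 vnorm_ge0.
move=> h; have hab := mulr_gt0 ha hb.
rewrite -subr_ge0 -(pmulr_rge0 _ hab); nra.
Qed.

Lemma CS x y : `|dotv x y| <= vnorm x * vnorm y.
Proof.
rewrite ler_norml dotv_le andbT lerNl -dotvNl.
by rewrite -(vnormN x) dotv_le.
Qed.

Lemma sq_le (a b : R) : 0 <= b -> a ^+ 2 <= b ^+ 2 -> a <= b.
Proof. move=> hb h; nra. Qed.

Lemma vnormD x y : vnorm (x + y) <= vnorm x + vnorm y.
Proof.
apply: sq_le; first by rewrite addr_ge0 ?vnorm_ge0.
rewrite vnorm_sq dotvDl !dotvDr (dotvC y x) -!vnorm_sq.
have := dotv_le x y; nra.
Qed.

Lemma vnormD3 x y w : vnorm (x + y + w) <= vnorm x + vnorm y + vnorm w.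
Proof. by apply: le_trans (vnormD _ _) _; rewrite lerD2r vnormD. Qed.

Lemma vnormBle x y : vnorm (x - y) <= vnorm x + vnorm y.
Proof. by rewrite -(vnormN y) vnormD. Qed.

Lemma coord_le x i : `|x i 0| <= vnorm x.
Proof.
rewrite -sqrtr_sqr ler_sqrt ?dotv_ge0 // /dotv (bigD1 i) //= -expr2 lerDl.
by apply: sumr_ge0 => j _; rewrite -expr2 sqr_ge0.
Qed.

Lemma vnorm_coord_le x (c : R) : 0 <= c -> (forall i, `|x i 0| <= c) ->
  vnorm x <= n%:R * c.
Proof.
move=> c0 h; apply: sq_le; first by rewrite mulr_ge0.
rewrite vnorm_sq.
have -> : dotv x x = \sum_(i < n) `|x i 0| ^+ 2.
  by apply: eq_bigr => i _; rewrite real_normK ?num_real // expr2.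
apply: (@le_trans _ _ (\sum_(i < n) c ^+ 2)).
  by apply: ler_sum => i _; rewrite lerXn2r ?nnegrE.
rewrite sumr_const card_ord exprMn -[c ^+ 2 *+ n]mulr_natl; apply: ler_wpM2r; first exact: sqr_ge0.
rewrite -natrX ler_nat; case: (n) => [|m] //.
by rewrite expnS expn1 leq_pmulr.
Qed.
End Basics.

Section Mat.
Variables (R : realType) (n : nat).
Implicit Types (x y v w : 'cV[R]_n) (M : 'M[R]_n).

Lemma mulmx_bound M : exists2 K : R, 0 <= K & forall v, vnorm (M *m v) <= K * vnorm v.
Proof.
pose S := \sum_(i < n) \sum_(j < n) `|M i j|.
have S0 : 0 <= S by apply: sumr_ge0 => i _; apply: sumr_ge0 => j _.
exists (n%:R * S); first by rewrite mulr_ge0.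
move=> v; rewrite -mulrA; apply: vnorm_coord_le; first by rewrite mulr_ge0 ?vnorm_ge0.
move=> i; rewrite mxE.
apply: le_trans (ler_norm_sum _ _ _) _.
apply: (@le_trans _ _ (\sum_(j < n) `|M i j| * vnorm v)).
  by apply: ler_sum => j _; rewrite normrM ler_wpM2l ?coord_le.
rewrite -mulr_suml ler_wpM2r ?vnorm_ge0 // /S.
rewrite [X in _ <= X](bigD1 i) //= lerDl.
by apply: sumr_ge0 => k _; apply: sumr_ge0.
Qed.

Lemma opnorm_le M v : vnorm (M *m v) <= opnorm M * vnorm v.
Proof.
pose E := [set vnorm (M *m x) | x in [set x : 'cV[R]_n | vnorm x <= 1]].
have hs : has_sup E.
  split; first by exists (vnorm (M *m 0)); exists 0 => //=; rewrite vnorm0.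
  have [K K0 hK] := mulmx_bound M.
  exists K => _ [y /= hy <-]; apply: le_trans (hK y) _.
  by rewrite -{2}(mulr1 K) ler_wpM2l.
have ub := sup_upper_bound hs.
have [v0|v0] := eqVneq (vnorm v) 0.
  by rewrite (vnorm_eq0 v0) mulmx0 vnorm0 mulr0.
have vp : 0 < vnorm v by rewrite lt_neqAle eq_sym v0 vnorm_ge0.
have h : E (vnorm (M *m ((vnorm v)^-1 *: v))).
  exists ((vnorm v)^-1 *: v) => //=.
  by rewrite vnormZ ger0_norm ?invr_ge0 ?vnorm_ge0 // mulVf.
have := ub _ h; rewrite -scalemxAr vnormZ ger0_norm ?invr_ge0 ?vnorm_ge0 //.
by rewrite -ler_pdivrMr // mulrC.
Qed.

End Mat.

Section Topo.
Variables (R : realType).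

Lemma mx_coord_le p q (A : 'M[R]_(p, q)) i j : `|A i j| <= `|A|.
Proof.
change (`|A i j| <= mx_norm A); rewrite mx_normrE.
exact: (le_bigmax _ (fun ij : 'I_p * 'I_q => `|A ij.1 ij.2|) (i, j)).
Qed.

Lemma trmx_norm_le {p q} (A : 'M[R]_(p, q)) : `|A^T| <= `|A|.
Proof.
change (mx_norm A^T <= `|A|); rewrite mx_normrE.
apply: bigmax_le => // ij _; rewrite mxE; exact: mx_coord_le.
Qed.

Lemma vnorm_le_mx n (v : 'cV[R]_n) : vnorm v <= n%:R * `|v|.
Proof. by apply: vnorm_coord_le => // i; apply: mx_coord_le. Qed.

Lemma mx_le_vnorm n (v : 'cV[R]_n) : `|v| <= vnorm v.
Proof.
change (mx_norm v <= vnorm v); rewrite mx_normrE.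
apply: bigmax_le; first exact: vnorm_ge0.
by move=> [i j] _ /=; rewrite ord1; apply: coord_le.
Qed.

Lemma trmx_cont p q : continuous (@trmx R p q).
Proof.
move=> A; apply/(@cvgrPdist_lt _ _ _ (nbhs A) (nbhs_filter A)) => e e0.
have := (@cvgrPdist_lt _ _ _ (nbhs A) (nbhs_filter A) id A).1 (@cvg_id _ _) e e0.
apply: (@filterS _ _ (nbhs_filter A)) => B /= h; rewrite -linearB /=.
exact: le_lt_trans (trmx_norm_le (A - B : 'M[R]_(p,q))) h.
Qed.

Lemma vnorm_cont n (v : 'cV[R]_n) : continuous (fun y : 'cV[R]_n => vnorm (v - y)).
Proof.
move=> y0; apply/(@cvgrPdist_lt _ _ _ (nbhs y0) (nbhs_filter y0)) => e e0.
have e1 : 0 < e / (n%:R + 1) by rewrite divr_gt0 // ltr_wpDl.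
have := (@cvgrPdist_lt _ _ _ (nbhs y0) (nbhs_filter y0) id y0).1 (@cvg_id _ _) _ e1.
apply: (@filterS _ _ (nbhs_filter y0)) => y /= h.
have h1 : vnorm (v - y0) <= vnorm (v - y) + vnorm (y - y0).
  by apply: le_trans (vnormD _ _); rewrite addrA subrK.
have h2 : vnorm (v - y) <= vnorm (v - y0) + vnorm (y - y0).
  have -> : v - y = (v - y0) + (y0 - y) by rewrite addrA subrK.
  by apply: le_trans (vnormD _ _) _; rewrite [vnorm (y0 - y)]vnormB.
have h3 : vnorm (y - y0) <= n%:R * `|y0 - y|.
  by rewrite vnormB; apply: vnorm_le_mx.
have h4 : n%:R * `|y0 - y| < e.
  move: h; rewrite ltr_pdivlMr ?ltr_wpDl // => h.
  apply: le_lt_trans h; rewrite mulrDr mulr1 mulrC lerDl //.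
rewrite ltr_norml; apply/andP; split; lra.
Qed.


Lemma proj_exists n (C : set 'cV[R]_n) (v : 'cV[R]_n) : C !=set0 -> closed C ->
  exists p, C p /\ forall y, C y -> vnorm (v - p) <= vnorm (v - y).
Proof.
move=> [c0 Cc0] clC.
pose rad := vnorm (v - c0).
pose K := C `&` ((fun y => vnorm (v - y)) @^-1` [set t | t <= rad]).
pose Kr := (@trmx R 1 n) @^-1` K.
have clK : closed K.
  apply: closedI => //; apply: preimage_closed; last exact: closed_le.
  by move=> y _; exact: vnorm_cont.
have clKr : closed Kr.
  by apply: preimage_closed => // r _; exact: trmx_cont.
have bKr : bounded_set Kr.
  rewrite /= /bounded_near.
  have hr : vnorm v + rad \is Num.real by apply: num_real.
  apply: (@filterS _ _ _ _ _ _ (nbhs_pinfty_ge hr)) => M /= hM r [Cr hr2].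
  rewrite -[r]trmxK; apply: le_trans (trmx_norm_le _) _.
  apply: le_trans (mx_le_vnorm _) _; apply: le_trans hM.
  have -> : r^T = v - (v - r^T) by apply/matrixP => i j; rewrite !mxE; lra.
  apply: le_trans (vnormBle _ _) _; rewrite lerD2l.
  exact: hr2.
have cK := bounded_closed_compact bKr clKr.
have cA : compact [set r^T | r in Kr].
  exact: (continuous_compact (continuous_subspaceT (@trmx_cont 1 n)) cK).
have A0 : [set r^T | r in Kr] !=set0.
  by exists c0; exists c0^T; rewrite ?trmxK //; split; rewrite /= ?trmxK.
have [p pA pmin] := compact_EVT_min A0 cA (continuous_subspaceT (vnorm_cont (v:=v))).
move: pA; rewrite in_setE => -[r [Cr hr] rp].
exists r^T; split => // y Cy; rewrite rp.
have [hy|hy] := leP (vnorm (v - y)) rad.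
  apply: pmin; rewrite in_setE; exists y^T; last by rewrite trmxK.
  by split; rewrite /= trmxK.
by rewrite -rp; exact: le_trans hr (ltW hy).
Qed.


Lemma conv_mem n (C : set 'cV[R]_n) (t : R) y p : convex_set C -> C y -> C p ->
  0 <= t -> t <= 1 -> C (t *: y + (1 - t) *: p).
Proof.
move=> hC Cy Cp t0 t1.
have := hC y p (Itv01 t0 t1); rewrite !in_setE => /(_ Cy Cp).
by [].
Qed.


Lemma vnorm_sqB n (a b : 'cV[R]_n) (t : R) :
  vnorm (a - t *: b) ^+ 2 = vnorm a ^+ 2 - 2 * t * dotv a b + t ^+ 2 * vnorm b ^+ 2.
Proof.
rewrite !vnorm_sq !(dotvBl, dotvBr, dotvZl, dotvZr) (dotvC b a); ring.
Qed.

Lemma projC_VI n (C : set 'cV[R]_n) v : C !=set0 -> closed C -> convex_set C ->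
  C (projC C v) /\ forall y, C y -> dotv (v - projC C v) (y - projC C v) <= 0.
Proof.
move=> C0 clC cvC.
have := xgetPex 0 (proj_exists v C0 clC).
rewrite -/(projC C v); set p := projC C v => -[Cp hmin]; split => // y Cy.
set a := v - p; set b := y - p.
have key : forall t, 0 < t -> t <= 1 -> 2 * dotv a b <= t * vnorm b ^+ 2.
  move=> t t0 t1.
  have := hmin _ (conv_mem cvC Cy Cp (ltW t0) t1).
  have -> : v - (t *: y + (1 - t) *: p) = a - t *: b.
    by rewrite /a /b scalerBr scalerBl scale1r; apply/matrixP => i j; rewrite !mxE; lra.
  move=> h; have h2 : vnorm a ^+ 2 <= vnorm (a - t *: b) ^+ 2.
    by rewrite lerXn2r ?nnegrE ?vnorm_ge0.
  move: h2; rewrite vnorm_sqB.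
  move=> h2; rewrite -subr_ge0 -(pmulr_rge0 _ t0); nra.
rewrite leNgt; apply/negP => d0.
set d := dotv a b in d0 key.
have hb := sqr_ge0 (vnorm b).
have den : 0 < vnorm b ^+ 2 + d by lra.
have t0 : 0 < d / (vnorm b ^+ 2 + d) by rewrite divr_gt0.
have t1 : d / (vnorm b ^+ 2 + d) <= 1 by rewrite ler_pdivrMr // mul1r; lra.
have := key _ t0 t1.
rewrite mulrAC ler_pdivlMr //; nra.
Qed.

End Topo.

Section Analysis.
Variables (R : realType) (n : nat).
Variables (F : 'cV[R]_n -> 'cV[R]_n) (JF : 'cV[R]_n -> 'M[R]_n).
Variables (X : set 'cV[R]_n) (xs : 'cV[R]_n) (r L1 L2 : R).
Hypothesis hC1 : C1_jacobian F JF.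
Hypothesis hball : forall y, vnorm (y - xs) < r -> X y.
Hypothesis hL1 : forall u v, X u -> X v -> vnorm (F u - F v) <= L1 * vnorm (u - v).
Hypothesis hL2 : forall u v, X u -> X v -> opnorm (JF u - JF v) <= L2 * vnorm (u - v).
Hypothesis L2pos : 0 < L2.

Lemma JF_bound x v : vnorm (x - xs) < r -> vnorm (JF x *m v) <= (L1 + 1) * vnorm v.
Proof.
move=> hx.
have [v0|v0] := eqVneq (vnorm v) 0.
  by rewrite (vnorm_eq0 v0) mulmx0 vnorm0 mulr0.
have ap : 0 < vnorm v by rewrite lt_neqAle eq_sym v0 vnorm_ge0.
have [del del0 hdel] := hC1.1 x 1 ltr01.
set s := Num.min del (r - vnorm (x - xs)).
have s0 : 0 < s by rewrite lt_min del0 subr_gt0 hx.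
set t := s / (2 * vnorm v).
have t0 : 0 < t by rewrite divr_gt0 // mulr_gt0.
have ta : t * vnorm v = s / 2.
  by rewrite /t; field.
have hy1 : vnorm (x + t *: v - x) = t * vnorm v.
  by rewrite addrAC subrr add0r vnormZ gtr0_norm.
have hs1 : s <= del by rewrite ge_min lexx.
have hs2 : s <= r - vnorm (x - xs) by rewrite ge_min lexx orbT.
have Xy : X (x + t *: v).
  apply: hball; have -> : x + t *: v - xs = (x - xs) + t *: v.
    by rewrite addrAC.
  apply: le_lt_trans (vnormD _ _) _; rewrite vnormZ gtr0_norm // ta; lra.
have Xx : X x by apply: hball.
have h1 := hdel (x + t *: v) (ltac:(rewrite hy1 ta; lra)).
have h2 := hL1 Xy Xx.
have e : x + t *: v - x = t *: v by apply/matrixP => i j; rewrite !mxE; lra.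
rewrite hy1 in h1 h2; rewrite e in h1.
set u := F (x + t *: v) - F x in h1 h2.
have h3 : vnorm (JF x *m (t *: v)) <= vnorm u + vnorm (u - JF x *m (t *: v)).
  by apply: le_trans (vnormBle _ _); rewrite opprB addrC subrK.
move: h3; rewrite -scalemxAr vnormZ gtr0_norm // => h3.
rewrite -scalemxAr in h1.
have : t * vnorm (JF x *m v) <= t * ((L1 + 1) * vnorm v) by nra.
by rewrite ler_pM2l.
Qed.


Lemma taylor x h : (forall t, 0 <= t -> t <= 1 -> vnorm (x + t *: h - xs) < r) ->
  vnorm (F (x + h) - F x - JF x *m h) <= 2 * L2 * vnorm h ^+ 2.
Proof.
move=> hseg.
have [a0|a0] := eqVneq (vnorm h) 0.
  rewrite (vnorm_eq0 a0) addr0 mulmx0 subrr subr0 vnorm0.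
  by rewrite mulr_ge0 ?sqr_ge0 // mulr_ge0 // ltW.
set a := vnorm h.
have ap : 0 < a by rewrite lt_neqAle eq_sym a0 vnorm_ge0.
set K := 2 * L2 * a ^+ 2.
have K0 : 0 <= K by rewrite mulr_ge0 ?sqr_ge0 // mulr_ge0 // ltW.
pose g t := F (x + t *: h) - F x - t *: (JF x *m h).
pose P t := vnorm (g t) <= K * t.
have g0 : g 0 = 0.
  by rewrite /g scale0r addr0 subrr scale0r subr0.
have loc : forall s, 0 <= s -> s <= 1 -> exists2 del, 0 < del &
    forall t, 0 <= t -> t <= 1 -> `|t - s| * a < del ->
    vnorm (g t - g s) <= K * `|t - s|.
  move=> s s0 s1.
  have [del del0 hdel] := hC1.1 (x + s *: h) (L2 * a) (mulr_gt0 L2pos ap).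
  exists del => // t t0 t1 hts.
  set y := x + s *: h.
  have Xy : X y by apply: hball; apply: hseg.
  have Xx : X x by apply: hball; have := hseg 0 (lexx _) ler01; rewrite scale0r addr0.
  have ewy : x + t *: h - y = (t - s) *: h.
    by apply/matrixP => i j; rewrite !mxE; lra.
  have := hdel (x + t *: h); rewrite ewy vnormZ => /(_ hts) h1.
  have -> : g t - g s = (F (x + t *: h) - F y - JF y *m ((t - s) *: h))
      + (t - s) *: ((JF y - JF x) *m h).
    rewrite /g -scalemxAr mulmxBl.
    move: (JF y *m h) (JF x *m h) => u1 u0.
    by apply/matrixP => i j; rewrite !mxE; lra.
  apply: le_trans (vnormD _ _) _.
  rewrite vnormZ.
  have h2 := opnorm_le (JF y - JF x) h.
  have h3 := hL2 Xy Xx.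
  have eyx : y - x = s *: h by apply/matrixP => i j; rewrite !mxE; lra.
  rewrite eyx vnormZ ger0_norm // in h3.
  have h4 : `|t - s| * vnorm ((JF y - JF x) *m h) <= `|t - s| * (L2 * a ^+ 2).
    rewrite ler_wpM2l //; apply: le_trans h2 _; rewrite -/a.
    rewrite -/a in h3; have h5 := ler_wpM2r (ltW ap) h3.
    have q : 0 <= L2 * a ^+ 2 by rewrite mulr_ge0 ?sqr_ge0 // ltW.
    apply: le_trans h5 _; rewrite expr2; nra.
  rewrite /K; rewrite -/y -/a in h1; lra.
have hS : has_sup [set s | 0 <= s <= 1 /\ forall t, 0 <= t -> t <= s -> P t].
  split.
    exists 0; split; first by rewrite lexx ler01.
    move=> t t0 t1; have -> : t = 0 by apply/eqP; rewrite eq_le t1 t0.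
    by rewrite /P g0 vnorm0 mulr0.
  by exists 1 => s [/andP[]].
set S := [set s | _] in hS.
set sig := sup S.
have S0 : S 0.
  split; first by rewrite lexx ler01.
  move=> t t0 t1; have -> : t = 0 by apply/eqP; rewrite eq_le t1 t0.
  by rewrite /P g0 vnorm0 mulr0.
have sig0 : 0 <= sig by apply: sup_upper_bound.
have sig1 : sig <= 1 by apply: ge_sup; [exists 0 | move=> s [/andP[]]].
have hA : forall t, 0 <= t -> t < sig -> P t.
  move=> t t0 tl.
  have [s [_ hs] hts] := sup_adherent (eps := sig - t) (ltac:(by rewrite subr_gt0)) hS.
  by apply: hs => //; rewrite -/sig in hts; lra.
have [del del0 hdel] := loc sig sig0 sig1.
have hB : P sig.
  have [->|sp] := eqVneq sig 0; first by rewrite /P g0 vnorm0 mulr0.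
  have sgt : 0 < sig by rewrite lt_neqAle eq_sym sp.
  set t := Num.max 0 (sig - del / (2 * a)).
  have da : 0 < del / (2 * a) by rewrite divr_gt0 // mulr_gt0.
  have t0 : 0 <= t by rewrite le_max lexx.
  have tl : t < sig by rewrite gt_max sgt; lra.
  have hPt := hA t t0 tl.
  have hd : `|t - sig| * a < del.
    rewrite ltr0_norm ?subr_lt0 //.
    have : sig - del / (2 * a) <= t by rewrite le_max lexx orbT.
    move=> ht; have -> : del = (del / (2 * a)) * (2 * a) by field; rewrite gt_eqF.
    nra.
  have := hdel t t0 (le_trans (ltW tl) sig1) hd.
  rewrite ltr0_norm ?subr_lt0 // => hg.
  have : vnorm (g sig) <= vnorm (g t) + vnorm (g t - g sig).
    by apply: le_trans (vnormBle _ _); rewrite opprB addrC subrK.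
  rewrite /P in hPt *; nra.
have hsig : sig = 1.
  apply/eqP; rewrite eq_le sig1 /=; rewrite leNgt; apply/negP => sl.
  set t1 := Num.min 1 (sig + del / (2 * a)).
  have da : 0 < del / (2 * a) by rewrite divr_gt0 // mulr_gt0.
  have t1g : sig < t1 by rewrite lt_min sl; lra.
  have : S t1.
    split; first by rewrite (le_trans sig0 (ltW t1g)) ge_min lexx.
    move=> t t0 tt1.
    have [tl|tg] := ltP t sig.
      by apply: hA.
    have [te|tne] := eqVneq t sig; first by rewrite te.
    have tgs : sig < t by rewrite lt_neqAle eq_sym tne tg.
    have tle1 : t <= 1 by apply: le_trans tt1 _; rewrite ge_min lexx.
    have hd : `|t - sig| * a < del.
      rewrite gtr0_norm ?subr_gt0 //.
      have : t <= sig + del / (2 * a) by apply: le_trans tt1 _; rewrite ge_min lexx orbT.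
      move=> ht; have -> : del = (del / (2 * a)) * (2 * a) by field; rewrite gt_eqF.
      nra.
    have := hdel t t0 tle1 hd.
    rewrite gtr0_norm ?subr_gt0 // => hg.
    have : vnorm (g t) <= vnorm (g sig) + vnorm (g t - g sig).
      by apply: le_trans (vnormD _ _); rewrite addrC subrK.
    rewrite /P in hB *; nra.
  move=> St1; have := sup_upper_bound hS St1; rewrite -/sig; lra.
have : P 1 by rewrite -hsig.
have e1 : x + 1 *: h = x + h by apply/matrixP=> i j; rewrite !mxE; lra.
have e2 : 1 *: (JF x *m h) = JF x *m h.
  by move: (JF x *m h) => u; apply/matrixP=> i j; rewrite !mxE; lra.
by rewrite /P /g e1 e2 mulr1.
Qed.

End Analysis.

Section Identities.
Variables (R : realType) (n : nat).
Implicit Types (a b c d e f g u z ph p xs x : 'cV[R]_n).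

Lemma dotvNr a b : dotv a (- b) = - dotv a b.
Proof. by rewrite dotvC dotvNl dotvC. Qed.

Lemma dot_id1 z ph p xs :
  dotv (z - ph - p) (xs - p) = dotv (ph - (z - p)) (p - xs).
Proof. rewrite !(dotvDl, dotvDr, dotvNl, dotvNr). ring. Qed.

Lemma vec_id2 p xs z x : p - xs = (z - x) + (x - xs) - (z - p).
Proof. by apply/matrixP => i j; rewrite !mxE; lra. Qed.

Lemma dot_expand a b c d u e :
  dotv (a + b - e - c) (d + u - e) =
  dotv b d + dotv b u - dotv b e + dotv (a - c) d + dotv (a - c) u
  - dotv (a - c) e - dotv e d - dotv e u + dotv e e.
Proof. rewrite !(dotvDl, dotvDr, dotvNl, dotvNr). ring. Qed.

End Identities.

Section Step.
Variables (R : realType) (n : nat) (C : set 'cV[R]_n).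
Variables (F : 'cV[R]_n -> 'cV[R]_n) (JF : 'cV[R]_n -> 'M[R]_n).
Variables (X : set 'cV[R]_n) (xs : 'cV[R]_n) (r L1 L2 mu alpha C1 : R).
Hypothesis C0 : C !=set0.
Hypothesis clC : closed C.
Hypothesis cvC : convex_set C.
Hypothesis hC1 : C1_jacobian F JF.
Hypothesis hvip : vip_sol F C xs.
Hypothesis hball : forall y, vnorm (y - xs) < r -> X y.
Hypothesis hL1 : forall u v, X u -> X v -> vnorm (F u - F v) <= L1 * vnorm (u - v).
Hypothesis hL2 : forall u v, X u -> X v -> opnorm (JF u - JF v) <= L2 * vnorm (u - v).
Hypothesis hmon : forall u d, X u -> mu * vnorm d ^+ 2 <= dotv (JF u *m d) d.
Hypothesis L1p : 0 < L1.
Hypothesis L2p : 0 < L2.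
Hypothesis mup : 0 < mu.

Definition KK := L1 + 1 + mu.
Definition cc := 2 * (KK + 3 * L1 + 1) / mu + 1.

Lemma step_dist x z Bm m rho del :
  C x -> C z -> 0 < m -> 0 <= rho -> rho * (KK + 2) <= 1 / 2 -> rho * mu <= 1 ->
  m < mu / 2 -> 0 < del -> del <= mu / 16 -> vnorm (x - xs) < r ->
  vnorm (z - projC C (z - phi F Bm m x z)) <= rho * m * vnorm (z - x) ->
  vnorm ((Bm - JF x) *m (z - x)) <= del * vnorm (z - x) ->
  vnorm (z - x) <= cc * vnorm (x - xs).
Proof.
move=> Cx Cz m0 rho0 hrK hrm hm del0 hdel hx he hB.
set d := z - x in he hB *; set u := x - xs.
set t := vnorm d; set s := vnorm u.
rewrite -/t in he hB.
set ph := phi F Bm m x z in he.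
have [Cp VI] := projC_VI (z - ph) C0 clC cvC.
set p := projC C (z - ph) in Cp VI he.
set e := z - p in he.
set eta := rho * m in he.
have t0 : 0 <= t := vnorm_ge0 _.
have s0 : 0 <= s := vnorm_ge0 _.
have eta0 : 0 <= eta by rewrite mulr_ge0 // ltW.
have eta1 : eta <= 1 by rewrite /eta; nra.
have etaK : eta * (KK + 1) <= mu / 4.
  have : rho * (KK + 2) * m <= 1 / 2 * m by rewrite ler_wpM2r // ltW.
  rewrite /eta /KK in hrK *; nra.
have Xx : X x by apply: hball.
have h1 : dotv (ph - e) (p - xs) <= 0.
  by have := VI xs hvip.1; rewrite dot_id1.
have h2 : dotv (ph - e - F xs) (p - xs) <= 0.
  have := hvip.2 p Cp; rewrite dotvBl; lra.
set V := (Bm + m%:M) *m d.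
have eph : ph = F x + V by [].
rewrite eph (vec_id2 p xs z x) -/d -/u -/e dot_expand in h2.
have hw1 : mu * t ^+ 2 <= dotv (JF x *m d) d by apply: hmon.
have hw1n : vnorm (JF x *m d) <= (L1 + 1) * t.
  exact: (JF_bound hC1 hball hL1 d hx).
have eV : V = JF x *m d + (Bm - JF x) *m d + m *: d.
  rewrite /V mulmxDl mul_scalar_mx mulmxBl.
  move: (Bm *m d) (JF x *m d) => a1 a2.
  by apply/matrixP => i j; rewrite !mxE; lra.
have hVd : (mu - del) * t ^+ 2 <= dotv V d.
  rewrite eV !dotvDl dotvZl -vnorm_sq.
  have := dotv_le (- ((Bm - JF x) *m d)) d.
  rewrite dotvNl vnormN => h3.
  have : vnorm ((Bm - JF x) *m d) * t <= del * t * t by rewrite ler_wpM2r.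
  rewrite -/t in h3; have := sqr_ge0 t; have := ltW m0; nra.
have hVn : vnorm V <= KK * t.
  rewrite eV; apply: le_trans (vnormD3 _ _ _) _.
  rewrite vnormZ gtr0_norm // /KK -/t.
  have : (del + m) * t <= mu * t by rewrite ler_wpM2r //; lra.
  lra.
have hGn : vnorm (F x - F xs) <= L1 * s by apply: hL1 => //; apply: hball; rewrite subrr vnorm0 (le_lt_trans (vnorm_ge0 _) hx).
have c1 : - dotv V u <= vnorm V * s.
  by have := dotv_le (- V) u; rewrite dotvNl vnormN.
have c2 : dotv V e <= vnorm V * vnorm e := dotv_le V e.
have c3 : - dotv (F x - F xs) d <= vnorm (F x - F xs) * t.
  by have := dotv_le (- (F x - F xs)) d; rewrite dotvNl vnormN.
have c4 : - dotv (F x - F xs) u <= vnorm (F x - F xs) * s.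
  by have := dotv_le (- (F x - F xs)) u; rewrite dotvNl vnormN.
have c5 := dotv_le (F x - F xs) e.
have c6 : dotv e d <= vnorm e * t := dotv_le e d.
have c7 : dotv e u <= vnorm e * s := dotv_le e u.
have c8 := dotv_ge0 e.
have ve : vnorm e <= eta * t by [].
have ve0 : 0 <= vnorm e := vnorm_ge0 _.
have hV0 : 0 <= vnorm V := vnorm_ge0 _.
have hG0 : 0 <= vnorm (F x - F xs) := vnorm_ge0 _.
have p1 : vnorm V * s <= KK * t * s by rewrite ler_wpM2r.
have p2 : vnorm V * vnorm e <= KK * t * (eta * t).
  by apply: ler_pM => //.
have p3 : vnorm (F x - F xs) * t <= L1 * s * t by rewrite ler_wpM2r.
have p4 : vnorm (F x - F xs) * s <= L1 * s * s by rewrite ler_wpM2r.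
have p5 : vnorm (F x - F xs) * vnorm e <= L1 * s * (eta * t) by apply: ler_pM.
have p6 : vnorm e * t <= eta * t * t by rewrite ler_wpM2r.
have p7 : vnorm e * s <= eta * t * s by rewrite ler_wpM2r.
have main : (mu - del) * t ^+ 2 <= KK * t * s + KK * eta * t ^+ 2 + L1 * s * t
    + L1 * s ^+ 2 + L1 * eta * s * t + eta * t ^+ 2 + eta * t * s.
  rewrite !expr2 in hVd *; lra.
have q1 : KK * eta * t ^+ 2 + eta * t ^+ 2 <= mu / 4 * t ^+ 2.
  have := ler_wpM2r (sqr_ge0 t) etaK; nra.
have q2 : L1 * eta * s * t <= L1 * s * t.
  have : 0 <= L1 * s * t by rewrite mulr_ge0 // mulr_ge0 // ltW.
  nra.
have q3 : eta * t * s <= t * s by have := mulr_ge0 t0 s0; nra.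
have q4 : del * t ^+ 2 <= mu / 16 * t ^+ 2 by rewrite ler_wpM2r // sqr_ge0.
have fin : mu / 2 * t ^+ 2 <= (KK + 2 * L1 + 1) * s * t + L1 * s ^+ 2.
  have := mulr_ge0 (ltW mup) (sqr_ge0 t); lra.
have cc1 : 1 <= cc.
  rewrite /cc lerDr; apply: divr_ge0; last exact: ltW.
  apply: mulr_ge0 => //; rewrite /KK; have := L1p; have := mup; lra.
have [ts|st] := leP t s.
  nra.
have tp : 0 < t by apply: le_lt_trans st.
set W := (KK + 3 * L1 + 1) * s.
have h6 : mu / 2 * t * t <= W * t.
  have h5 : L1 * s * s <= L1 * s * t.
    apply: ler_wpM2l; [apply: mulr_ge0 => //; exact: ltW L1p | exact: ltW].
  rewrite /W; rewrite !expr2 in fin; lra.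
rewrite ler_pM2r // in h6.
have h8 : t <= 2 * W / mu by rewrite ler_pdivlMr //; lra.
have -> : cc * s = 2 * W / mu + s.
  by rewrite /cc /W; field; apply/eqP => h0; move: mup; rewrite h0 ltxx.
lra.
Qed.

Lemma cc_ge1 : 1 <= cc.
Proof.
rewrite /cc lerDr; apply: divr_ge0; last exact: ltW.
apply: mulr_ge0 => //; rewrite /KK; have := L1p; have := mup; lra.
Qed.

Lemma merit_alg (z ph p y Fz : 'cV[R]_n) : dotv (z - ph - p) (y - p) <= 0 ->
  - dotv Fz (y - z) <= dotv (ph - Fz - (z - p)) (y - z) + dotv ph (z - p) - dotv (z - p) (z - p).
Proof.
rewrite !(dotvDl, dotvDr, dotvNl, dotvNr).
have := dotvC z ph; have := dotvC z p; have := dotvC z y; have := dotvC z Fz.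
have := dotvC ph p; have := dotvC ph y; have := dotvC ph Fz.
have := dotvC p y; have := dotvC p Fz; have := dotvC y Fz.
lra.
Qed.

Lemma quad_bound (G W a : R) : 0 < a -> G * W - a / 2 * W ^+ 2 <= G ^+ 2 / (2 * a).
Proof.
move=> a0.
have h : G ^+ 2 / (2 * a) - (G * W - a / 2 * W ^+ 2) = (G - a * W) ^+ 2 / (2 * a).
  by field; rewrite gt_eqF.
have : 0 <= (G - a * W) ^+ 2 / (2 * a) by rewrite divr_ge0 ?sqr_ge0 // mulr_ge0 // ltW.
lra.
Qed.

Definition PP := 2 * L2 * cc ^+ 2 + 2 * C1 * cc.
Definition LA := PP ^+ 2 / alpha + 1.
Definition LB := 2 * C1 * cc ^+ 2 + 1.
Definition LC := cc ^+ 2 / alpha + 1.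

Hypothesis alp : 0 < alpha.
Hypothesis C1p : 0 < C1.

Lemma step_merit x z Bm m rho del :
  C x -> C z -> 0 < m -> 0 <= rho -> rho * (KK + 2) <= 1 / 2 -> rho * mu <= 1 ->
  m < mu / 2 -> 0 < del -> del <= mu / 16 -> (cc + 1) * vnorm (x - xs) < r ->
  m <= C1 * vnorm (x - xs) ->
  vnorm (z - projC C (z - phi F Bm m x z)) <= rho * m * vnorm (z - x) ->
  dotv (z - projC C (z - phi F Bm m x z)) (phi F Bm m x z + z - x)
    <= rho * m * vnorm (z - x) ^+ 2 ->
  vnorm ((Bm - JF x) *m (z - x)) <= del * vnorm (z - x) ->
  merit F C alpha z <= LA * vnorm (x - xs) ^+ 4
    + (1 * del + LB) * vnorm (x - xs) ^+ 3
    + (1 * del + LC * del ^+ 2) * vnorm (x - xs) ^+ 2.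
Proof.
move=> Cx Cz m0 rho0 hrK hrm hm del0 hdel hx hmC he he2 hB.
have c1 := cc_ge1.
have s0 : 0 <= vnorm (x - xs) := vnorm_ge0 _.
have hx' : vnorm (x - xs) < r.
  by apply: le_lt_trans hx; rewrite -{1}(mul1r (vnorm _)) ler_wpM2r //; lra.
have tcs := step_dist Cx Cz m0 rho0 hrK hrm hm del0 hdel hx' he hB.
set d := z - x in he he2 hB tcs *; set u := x - xs in hx hmC s0 tcs hx' *.
set t := vnorm d in he he2 hB tcs *; set s := vnorm u in hx hmC s0 tcs hx' *.
set ph := phi F Bm m x z in he he2 *.
have [Cp VI] := projC_VI (z - ph) C0 clC cvC.
set p := projC C (z - ph) in Cp VI he he2 *.
set e := z - p in he he2 *.
have t0 : 0 <= t := vnorm_ge0 _.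
have rho1 : rho <= 1.
  have : 0 <= KK by rewrite /KK; have := L1p; have := mup; lra.
  nra.
have Xx : X x by apply: hball.
have hseg : forall tau, 0 <= tau -> tau <= 1 -> vnorm (x + tau *: d - xs) < r.
  move=> tau ta0 ta1.
  have -> : x + tau *: d - xs = u + tau *: d.
    by rewrite /u; move: (tau *: d) => w; apply/matrixP => i j; rewrite !mxE; lra.
  apply: le_lt_trans (vnormD _ _) _; rewrite vnormZ ger0_norm // -/t -/s.
  apply: le_lt_trans hx; have : tau * t <= t by nra.
  lra.
have hT := taylor hC1 hball hL2 L2p hseg.
have ez : x + d = z by rewrite /d; apply/matrixP => i j; rewrite !mxE; lra.
rewrite ez -/t in hT.
set g := ph - F z - e.
have eg : g = - (F z - F x - JF x *m d) + (Bm - JF x) *m d + m *: d - e.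
  rewrite /g /ph /phi -/d mulmxDl mul_scalar_mx mulmxBl.
  move: (Bm *m d) (JF x *m d) => a1 a2.
  by apply/matrixP => i j; rewrite !mxE; lra.
have hG : vnorm g <= 2 * L2 * t ^+ 2 + del * t + m * t + rho * m * t.
  rewrite eg; apply: le_trans (vnormBle _ _) _.
  have := vnormD3 (- (F z - F x - JF x *m d)) ((Bm - JF x) *m d) (m *: d).
  rewrite vnormN vnormZ gtr0_norm // -/t; lra.
set G := vnorm g in hG *.
have G0 : 0 <= G := vnorm_ge0 _.
have a1 : t ^+ 2 <= (cc * s) ^+ 2 by rewrite lerXn2r // nnegrE mulr_ge0 // ltW // (lt_le_trans ltr01 c1).
have a2 : m * t <= C1 * s * (cc * s) by apply: ler_pM => //; exact: ltW.
have a3 : rho * m * t <= m * t.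
  have : 0 <= m * t by rewrite mulr_ge0 // ltW.
  nra.
have a4 : del * t <= del * (cc * s) by rewrite ler_wpM2l // ltW.
have a5 : 2 * L2 * t ^+ 2 <= 2 * L2 * (cc * s) ^+ 2.
  by rewrite ler_wpM2l // mulr_ge0 // ltW.
have hQ : G <= PP * s ^+ 2 + cc * del * s.
  rewrite /PP; have := L2p; have := C1p; rewrite !expr2 in a1 a5 *; lra.
have hQ0 : 0 <= PP * s ^+ 2 + cc * del * s by apply: le_trans hQ.
have hG2 : G ^+ 2 <= 2 * PP ^+ 2 * s ^+ 4 + 2 * cc ^+ 2 * del ^+ 2 * s ^+ 2.
  have : G ^+ 2 <= (PP * s ^+ 2 + cc * del * s) ^+ 2 by rewrite lerXn2r.
  have := sqr_ge0 (PP * s ^+ 2 - cc * del * s).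
  lra.
have hpe : dotv ph e <= 2 * (rho * m * t ^+ 2).
  have eq1 : ph + z - x = ph + d by rewrite /d addrA.
  rewrite eq1 dotvDr in he2.
  have := dotv_le (- e) d; rewrite dotvNl vnormN -/t => h3.
  have : vnorm e * t <= rho * m * t * t by rewrite ler_wpM2r.
  rewrite dotvC expr2; lra.
have hee := dotv_ge0 e.
have b1 : m * t ^+ 2 <= C1 * s * (cc * s) ^+ 2 by apply: ler_pM; rewrite ?sqr_ge0 // ltW.
have b2 : rho * (m * t ^+ 2) <= m * t ^+ 2.
  have : 0 <= m * t ^+ 2 by rewrite mulr_ge0 ?sqr_ge0 // ltW.
  nra.
have hval : forall y, C y ->
    - dotv (F z) (y - z) - alpha / 2 * vnorm (y - z) ^+ 2
      <= G ^+ 2 / (2 * alpha) + 2 * (rho * m * t ^+ 2).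
  move=> y Cy.
  have h1 := merit_alg (F z) (VI y Cy).
  rewrite -/e -/g in h1.
  have h2 := dotv_le g (y - z); rewrite -/G in h2.
  have h3 := quad_bound G (vnorm (y - z)) alp.
  lra.
have hbound : G ^+ 2 / (2 * alpha) + 2 * (rho * m * t ^+ 2) <=
    LA * s ^+ 4 + (1 * del + LB) * s ^+ 3 + (1 * del + LC * del ^+ 2) * s ^+ 2.
  have k1 : G ^+ 2 / (2 * alpha) <= (2 * PP ^+ 2 * s ^+ 4 + 2 * cc ^+ 2 * del ^+ 2 * s ^+ 2) / (2 * alpha).
    by rewrite ler_pM2r // invr_gt0 mulr_gt0.
  have k2 : (2 * PP ^+ 2 * s ^+ 4 + 2 * cc ^+ 2 * del ^+ 2 * s ^+ 2) / (2 * alpha)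
      = PP ^+ 2 / alpha * s ^+ 4 + cc ^+ 2 / alpha * del ^+ 2 * s ^+ 2.
    by field; rewrite gt_eqF.
  have k3 : 2 * (rho * m * t ^+ 2) <= 2 * C1 * cc ^+ 2 * s ^+ 3.
    rewrite -mulrA; have : rho * (m * t ^+ 2) <= C1 * s * (cc * s) ^+ 2 by lra.
    rewrite !exprS !expr0 !mulr1; lra.
  have n1 : 0 <= s ^+ 4 by rewrite exprn_ge0.
  have n2 : 0 <= del * s ^+ 3 by rewrite mulr_ge0 ?exprn_ge0 // ltW.
  have n3 : 0 <= s ^+ 3 by rewrite exprn_ge0.
  have n4 : 0 <= del * s ^+ 2 by rewrite mulr_ge0 ?exprn_ge0 // ltW.
  have n5 : 0 <= del ^+ 2 * s ^+ 2 by rewrite mulr_ge0 ?exprn_ge0 // ltW.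
  rewrite /LA /LB /LC; rewrite k2 in k1; lra.
apply: ge_sup.
  by case: C0 => y0 Cy0; exists (- dotv (F z) (y0 - z) - alpha / 2 * vnorm (y0 - z) ^+ 2); exists y0.
move=> _ [y Cy <-]; apply: le_trans (hval y Cy) hbound.
Qed.

End Step.
Unset Implicit Arguments.
Set Strict Implicit.

Theorem mainTheorem5 (R : realType) (n : nat)
  (C : set 'cV[R]_n) (F : 'cV[R]_n -> 'cV[R]_n) (JF : 'cV[R]_n -> 'M[R]_n)
  (xstar : 'cV[R]_n) (X : set 'cV[R]_n) (L1 L2 mu : R)
  (x : nat -> 'cV[R]_n) (B : nat -> 'M[R]_n) (muk rho delta : nat -> R)
  (z zhat : nat -> 'cV[R]_n) (D C1 C2 : R) :
  C !=set0 -> closed C -> convex_set C ->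
  C1_jacobian F JF ->
  vip_sol F C xstar ->
  nbhs xstar X -> 0 < L1 -> 0 < L2 -> 0 < mu ->
  (forall u v, X u -> X v -> vnorm (F u - F v) <= L1 * vnorm (u - v)) ->
  (forall u v, X u -> X v -> opnorm (JF u - JF v) <= L2 * vnorm (u - v)) ->
  (forall u d, X u -> mu * vnorm d ^+ 2 <= dotv (JF u *m d) d) ->
  (forall k, C (x k)) -> x @ \oo --> xstar ->
  (forall k, 0 < muk k) -> (forall k, 0 <= rho k) -> (forall k, 0 < delta k) ->
  (forall k, C (z k) /\
     vnorm (z k - projC C (z k - phi F (B k) (muk k) (x k) (z k)))
       <= rho k * muk k * vnorm (z k - x k) /\
     dotv (z k - projC C (z k - phi F (B k) (muk k) (x k) (z k)))
          (phi F (B k) (muk k) (x k) (z k) + z k - x k)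
       <= rho k * muk k * vnorm (z k - x k) ^+ 2) ->
  (forall k, vip_sol (phi F (B k) (muk k) (x k)) C (zhat k)) ->
  0 < D -> 0 < C1 -> 0 < C2 ->
  (\forall k \near \oo, opnorm (B k - JF (x k)) <= D) ->
  (exists2 M : R, 0 < M &
     \forall k \near \oo, muk k <= M * vnorm (x k - projC C (x k - F (x k)))) ->
  (\forall k \near \oo, muk k <= C1 * vnorm (x k - xstar)) ->
  rho @ \oo --> (0 : R) ->
  (\forall k \near \oo, posdef (B k + (muk k)%:M) /\
     (1 + opnorm (B k + (muk k)%:M)) / min_eig_sym (B k + (muk k)%:M) <= C2) ->
  (\forall k \near \oo,
     vnorm ((B k - JF (x k)) *m (z k - x k)) <= delta k * vnorm (z k - x k) /\
     muk k < mu / 2 /\ delta k <= mu / 16) ->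
  forall alpha : R, 0 < alpha ->
  exists L1' L2' L3' L4' L5' : R,
    [/\ 0 < L1', 0 < L2', 0 < L3', 0 < L4' & 0 < L5'] /\
    \forall k \near \oo,
      merit F C alpha (z k)
        <= L1' * vnorm (x k - xstar) ^+ 4
           + (L2' * delta k + L3') * vnorm (x k - xstar) ^+ 3
           + (L4' * delta k + L5' * delta k ^+ 2) * vnorm (x k - xstar) ^+ 2.
Proof.
move=> C0 clC cvC hC1 hvip nX L1p L2p mup hL1 hL2 hmon hxC hxcv mukp rhop delp
  hz hzh D0 C10 C20 hD hM hmuC hrho hpd hev alpha alp.
have [r r0 hrX] : exists2 r : R, 0 < r & forall y, vnorm (y - xstar) < r -> X y.
  move/nbhs_ballP: nX => [e e0 he]; exists e => // y hy; apply: he.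
  rewrite -ball_normE /ball_ /=; apply: le_lt_trans (mx_le_vnorm _) _.
  by rewrite vnormB.
have KK0 : 0 < KK L1 mu by rewrite /KK; lra.
have cc1 := cc_ge1 L1p mup.
exists (LA L1 L2 mu alpha C1), 1, (LB L1 mu C1), 1, (LC L1 mu alpha).
split.
  split => //; rewrite ?ltr01 //.
  - rewrite /LA; have := divr_ge0 (sqr_ge0 (PP L1 L2 mu C1)) (ltW alp); lra.
  - rewrite /LB; have := mulr_ge0 (ltW C10) (sqr_ge0 (cc L1 mu)); lra.
  - rewrite /LC; have := divr_ge0 (sqr_ge0 (cc L1 mu)) (ltW alp); lra.
set eps := 1 / (2 * KK L1 mu + 4 + mu).
have den0 : 0 < 2 * KK L1 mu + 4 + mu by lra.
have eps0 : 0 < eps by rewrite /eps divr_gt0.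
have epsE : eps * (2 * KK L1 mu + 4 + mu) = 1.
  by rewrite /eps; field; rewrite gt_eqF.
have hr : \forall k \near \oo, `|0 - rho k| < eps.
  exact: (cvgrPdist_lt _ _).1 hrho _ eps0.
set rx := r / ((cc L1 mu + 1) * (n%:R + 1)).
have den1 : 0 < (cc L1 mu + 1) * (n%:R + 1).
  by rewrite mulr_gt0 // ?ltr_wpDl //; lra.
have rx0 : 0 < rx by rewrite /rx divr_gt0.
have rxE : (cc L1 mu + 1) * (n%:R + 1) * rx = r.
  by rewrite /rx mulrC divfK // gt_eqF.
have hx : \forall k \near \oo, `|xstar - x k| < rx.
  exact: (cvgrPdist_lt _ _).1 hxcv _ rx0.
near=> k.
have [Czk [he1 he2]] := hz k.
have [hB [hm hdel]] : vnorm ((B k - JF (x k)) *m (z k - x k)) <= delta k * vnorm (z k - x k) /\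
     muk k < mu / 2 /\ delta k <= mu / 16 by near: k; exact: hev.
have hmC : muk k <= C1 * vnorm (x k - xstar) by near: k; exact: hmuC.
have hrk : `|0 - rho k| < eps by near: k; exact: hr.
have hxk : `|xstar - x k| < rx by near: k; exact: hx.
have rk : rho k < eps by move: hrk; rewrite sub0r normrN ger0_norm.
have em : 0 <= eps * mu by apply: mulr_ge0; apply: ltW.
have eK : 0 <= eps * KK L1 mu by apply: mulr_ge0; apply: ltW.
apply: (step_merit C0 clC cvC hC1 hvip hrX hL1 hL2 hmon L1p L2p mup alp C10
  (hxC k) Czk (mukp k) (rhop k) _ _ hm (delp k) hdel _ hmC he1 he2 hB).
- have : rho k * (KK L1 mu + 2) <= eps * (KK L1 mu + 2) by rewrite ler_wpM2r // ?ltW //; lra.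
  lra.
- have : rho k * mu <= eps * mu by rewrite ler_wpM2r // ltW.
  lra.
- set a := `|xstar - x k|.
  have a0 : 0 <= a := normr_ge0 _.
  have h1 : vnorm (x k - xstar) <= n%:R * a.
    by rewrite vnormB /a; apply: vnorm_le_mx.
  have n0 : 0 <= (n%:R : R) := ler0n _ _.
  have h2 : (cc L1 mu + 1) * vnorm (x k - xstar) <= (cc L1 mu + 1) * (n%:R * a).
    by rewrite ler_wpM2l //; lra.
  have h3 : (cc L1 mu + 1) * (n%:R * a) <= (cc L1 mu + 1) * (n%:R + 1) * a.
    have : 0 <= (cc L1 mu + 1) * a by apply: mulr_ge0 => //; lra.
    lra.
  have h4 : (cc L1 mu + 1) * (n%:R + 1) * a < (cc L1 mu + 1) * (n%:R + 1) * rx.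
    by rewrite ltr_pM2l.
  lra.
Unshelve. all: end_near.
Qed.
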